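(* Let $d\ge2$ and let $g,g_0,\dots,g_d$ be positive integers with $g=\mathrm{lcm}(g_0,\dots,g_d)$. Let $A=(\alpha_0,\dots,\alpha_d)$ be positive integers with $\sum_{i=0}^d1/\alpha_i=1/g$, and let $w=(w_0,\dots,w_d)$ with $w_i=t_A/\alpha_i$, $t_A=\mathrm{lcm}(\alpha_0,\dots,\alpha_d)$, $|w|=\sum w_i$. Let $P=[v_0\ \cdots\ v_d]$ be a $d\times(d+1)$ integer matrix of the form $$P=\begin{pmatrix}a_{11}&a_{12}&\cdots&a_{1d}&-b_1\\0&a_{22}&\cdots&a_{2d}&-b_2\\\vdots&\ddots&\ddots&\vdots&\vdots\\0&\cdots&0&a_{dd}&-b_d\end{pmatrix}$$ such that for all $k=1,\dots,d$: (i) $a_{kk}\ge1$ and $a_{kk}\mid\alpha_{k-1}$; (ii) $0\le a_{ik}<a_{kk}$ for $1\le i<k$; (iii) $b_kw_d=a_{kk}w_{k-1}+a_{k,k+1}w_k+\dots+a_{kd}w_{d-1}$. Then $\Delta=\Delta(P)$ is a $d$-dimensional lattice simplex containing the origin in its interior, its reduced weight system is $w$, and for $k=0,\dots,d$ the vertex $u_k=(u_{k1},\dots,u_{kd})$ of $\Delta^*$ satisfying $\langle u_k,v_j\rangle=-1$ for all $j\ne k$ is given recursively for $j=1,\dots,d$ by $$u_{kj}=\begin{cases}\dfrac{|w|-w_k}{a_{jj}w_k}-\dfrac{\sum_{l=1}^{j-1}a_{lj}u_{kl}}{a_{jj}},& j=k+1,\\[2mm] \dfrac{-1-\sum_{l=1}^{j-1}a_{lj}u_{kl}}{a_{jj}},&\text{otherwise.}\end{cases}$$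 If moreover $g_ku_k$ is a primitive vector of $\mathbb{Z}^d$ for every $k$, then $\Delta$ has Gorenstein index $g$ and local Gorenstein indices $g_0,\dots,g_d$.
   Context: $\Delta(P)$ is the convex hull of the columns of $P$; its dual is $\Delta^*=\{u:\langle u,v\rangle\ge-1\ \forall v\in\Delta\}$. For an IP lattice simplex (vertices in $\mathbb{Z}^d$, origin in the interior) with vertices $v_0,\dots,v_d$, the weight system is $(q_0,\dots,q_d)$, $q_i=|\det(v_j:j\ne i)|$, and the reduced weight system is it divided by $\gcd(q_0,\dots,q_d)$. The $k$-th local Gorenstein index is the least positive integer $g_k$ with $g_ku_k\in\mathbb{Z}^d$, where $u_k$ is the vertex of $\Delta^*$ with $\langle u_k,v_j\rangle=-1$ for $j\neq k$; the Gorenstein index is the least $g\ge1$ with $g\Delta^*$ integral, equivalently $\mathrm{lcm}(g_0,\dots,g_d)$. *)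

(* Defs.v *)
From HB Require Import structures.
From mathcomp Require Import all_boot all_order all_algebra.
Set Implicit Arguments. Unset Strict Implicit. Unset Printing Implicit Defensive.
Import Order.TTheory GRing.Theory Num.Theory.
Local Open Scope ring_scope.

(* The d x (d+1) integer matrix P = [v_0 ... v_d] of the paper, built from
   1-based entries a i k (1 <= i,k <= d) and b k (1 <= k <= d):
   column j (0-based, j < d) is (a 1 (j+1), ..., a d (j+1)), the last column
   is (-b 1, ..., -b d). *)
Definition Pmat (d : nat) (a : nat -> nat -> int) (b : nat -> int)
  : 'M[int]_(d, d.+1) :=
  \matrix_(i < d, j < d.+1) if (j < d)%N then a i.+1 j.+1 else - b i.+1.

Definition vtx (d : nat) (P : 'M[int]_(d, d.+1)) (j : 'I_d.+1) : 'cV[rat]_d :=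
  \col_(i < d) ((P i j)%:~R : rat).

Definition pairing (d : nat) (u : 'rV[rat]_d) (v : 'cV[rat]_d) : rat :=
  \sum_(i < d) u 0 i * v i 0.

(* Delta(P) is a d-dimensional lattice simplex with the origin in its interior:
   the vertices are affinely independent (v_1 - v_0, ..., v_d - v_0 linearly
   independent) and the origin has strictly positive barycentric coordinates. *)
Definition IP_simplex (d : nat) (P : 'M[int]_(d, d.+1)) : Prop :=
  \rank (\matrix_(i < d, j < d) (vtx P (lift ord0 j) i 0 - vtx P ord0 i 0)) = d
  /\ exists lam : 'I_d.+1 -> rat,
       (forall j, 0 < lam j) /\ \sum_(j < d.+1) lam j = 1 /\
       (forall i : 'I_d, \sum_(j < d.+1) lam j * vtx P j i 0 = 0).

Definition weight (d : nat) (P : 'M[int]_(d, d.+1)) (i : 'I_d.+1) : nat :=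
  `|\det (col' i P)|%N.

Definition reduced_weight (d : nat) (P : 'M[int]_(d, d.+1)) (i : 'I_d.+1) : nat :=
  (weight P i %/ \big[gcdn/0%N]_(j < d.+1) weight P j)%N.

Definition is_dual_vertex (d : nat) (P : 'M[int]_(d, d.+1)) (k : 'I_d.+1)
  (u : 'rV[rat]_d) : Prop :=
  forall j : 'I_d.+1, j != k -> pairing u (vtx P j) = -1.

Definition integral_vec (d : nat) (u : 'rV[rat]_d) : bool :=
  [forall i, u 0 i \is a Num.int].

Definition primitive_vec (d : nat) (u : 'rV[rat]_d) : Prop :=
  exists z : 'rV[int]_d, u = map_mx (fun x : int => (x%:~R : rat)) z /\
    (\big[gcdn/0%N]_(i < d) `|z ord0 i|%N = 1)%N.

Definition is_local_gorenstein_index (d : nat) (P : 'M[int]_(d, d.+1))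
  (k : 'I_d.+1) (n : nat) : Prop :=
  exists u, is_dual_vertex P k u /\ (0 < n)%N /\ integral_vec (n%:R *: u) /\
    forall m : nat, (0 < m)%N -> integral_vec (m%:R *: u) -> (n <= m)%N.

(* n is the Gorenstein index: least positive integer with n Delta^* integral,
   i.e. all vertices n u_k of n Delta^* are lattice points *)
Definition is_gorenstein_index (d : nat) (P : 'M[int]_(d, d.+1)) (n : nat) : Prop :=
  (0 < n)%N /\
  (forall k u, is_dual_vertex P k u -> integral_vec (n%:R *: u)) /\
  forall m : nat, (0 < m)%N ->
    (forall k u, is_dual_vertex P k u -> integral_vec (m%:R *: u)) -> (n <= m)%N.

Definition tA (d : nat) (alpha : nat -> nat) : nat :=
  \big[lcmn/1%N]_(i < d.+1) alpha i.
Definition wt (d : nat) (alpha : nat -> nat) (i : nat) : nat := (tA d alpha %/ alpha i)%N.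
Definition wsum (d : nat) (alpha : nat -> nat) : nat := (\sum_(i < d.+1) wt d alpha i)%N.

(* The recursive formula for u_kj (j 1-based, k 0-based); prev = [u_k1; ...; u_k(j-1)] *)
Definition ustep (d : nat) (a : nat -> nat -> int) (alpha : nat -> nat)
  (k j : nat) (prev : seq rat) : rat :=
  let ajj : rat := (a j j)%:~R in
  let s : rat := \sum_(1 <= l < j) (a l j)%:~R * nth 0 prev l.-1 in
  let wk : rat := (wt d alpha k)%:R in
  if j == k.+1 then ((wsum d alpha)%:R - wk) / (ajj * wk) - s / ajj
  else (-1 - s) / ajj.

Fixpoint useq (d : nat) (a : nat -> nat -> int) (alpha : nat -> nat) (k n : nat)
  : seq rat :=
  match n with
  | 0 => [::]
  | n'.+1 => let p := useq d a alpha k n' in rcons p (ustep d a alpha k n'.+1 p)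
  end.

Definition urec (d : nat) (a : nat -> nat -> int) (alpha : nat -> nat) (k : nat)
  : 'rV[rat]_d := \row_(j < d) nth 0 (useq d a alpha k d) j.

(* Main.v *)
Require Import Defs.
From HB Require Import structures.
From mathcomp Require Import all_boot all_order all_algebra.
From mathcomp Require Import zify ring lra.
Set Implicit Arguments. Unset Strict Implicit. Unset Printing Implicit Defensive.
Import Order.TTheory GRing.Theory Num.Theory.
Local Open Scope ring_scope.

Lemma tA_gt0 d alpha : (forall i, (i <= d)%N -> (0 < alpha i)%N) -> (0 < tA d alpha)%N.
Proof.
move=> Ha; rewrite /tA; apply: (big_ind (fun x => 0 < x)%N) => //.
  by move=> x y Hx Hy; rewrite lcmn_gt0 Hx Hy.
by move=> i _; apply: Ha; rewrite -ltnS.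
Qed.
Lemma alpha_dvd_tA d alpha i : (i <= d)%N -> (alpha i %| tA d alpha)%N.
Proof.
rewrite -ltnS => Hi; rewrite /tA.
by apply: (biglcmn_sup (Ordinal Hi)).
Qed.
Lemma wt_gt0 d alpha i : (forall i, (i <= d)%N -> (0 < alpha i)%N) ->
  (i <= d)%N -> (0 < wt d alpha i)%N.
Proof.
move=> Ha Hi; rewrite /wt divn_gt0 ?Ha //.
apply: dvdn_leq; [exact: tA_gt0 | exact: alpha_dvd_tA].
Qed.
Lemma wt_gcd1 d alpha : (forall i, (i <= d)%N -> (0 < alpha i)%N) ->
  (\big[gcdn/0%N]_(j < d.+1) wt d alpha j = 1)%N.
Proof.
move=> Ha; set G := (\big[gcdn/0%N]_(j < d.+1) wt d alpha j).
have HG := (elimT (dvdn_biggcdP _ _ G) (dvdnn G)).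
have G0 : (0 < G)%N.
  rewrite lt0n; apply/eqP => G0; move: (HG ord0 isT); rewrite G0 dvd0n.
  by move/eqP => E; have := wt_gt0 (i:=0) Ha (isT); rewrite E.
have tA0 := tA_gt0 Ha.
have GtA : (G %| tA d alpha)%N.
  apply: (dvdn_trans (HG ord0 isT)); rewrite /wt; apply: dvdn_div; exact: alpha_dvd_tA.
have H : (tA d alpha %| tA d alpha %/ G)%N.
  rewrite {1}/tA; apply/dvdn_biglcmP => i _.
  have Hi : (i <= d)%N by rewrite -ltnS.
  have := alpha_dvd_tA alpha Hi; move/divnK => E.
  rewrite -E mulnC -muln_divA ?HG //; exact: dvdn_mulr.
have : (0 < tA d alpha %/ G)%N.
  rewrite divn_gt0 //; exact: dvdn_leq tA0 GtA.
move=> /dvdn_leq/(_ H); rewrite leq_divRL // => Hle.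
apply/eqP; rewrite eqn_leq G0 andbT; nia.
Qed.
Lemma rel_int d (a : nat -> nat -> int) b alpha
  (Htri : forall i k, (1 <= k)%N -> (k < i)%N -> (i <= d)%N -> a i k = 0)
  (Hiii : forall k, (1 <= k <= d)%N ->
     b k * (wt d alpha d)%:Z = \sum_(k <= l < d.+1) a k l * (wt d alpha l.-1)%:Z)
  (i : 'I_d) :
  \sum_(j < d.+1) (wt d alpha j)%:Z * Pmat d a b i j = 0.
Proof.
rewrite big_ord_recr /= !mxE /= ltnn.
have Hi : (1 <= i.+1 <= d)%N by rewrite /= ltn_ord.
have Hb := Hiii _ Hi.
rewrite (eq_bigr (fun j : 'I_d => a i.+1 j.+1 * (wt d alpha (j.+1).-1)%:Z)); last first.
  by move=> j _; rewrite mxE /= ltn_ord mulrC.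
rewrite -(big_mkord xpredT (fun j => a i.+1 j.+1 * (wt d alpha (j.+1).-1)%:Z)).
rewrite -(big_add1 _ _ 0 d.+1 xpredT (fun l => a i.+1 l * (wt d alpha l.-1)%:Z)).
rewrite (@big_cat_nat _ _ _ i.+1 1) //=; last by rewrite ltnS ltnW.
rewrite big_nat_cond big1 ?add0r; last first.
  move=> l /andP [/andP [H1 H2] _]; rewrite Htri //; exact: ltn_ord.
rewrite -Hb; ring.
Qed.
Definition A0 d (P : 'M[int]_(d, d.+1)) : 'M[rat]_d :=
  \matrix_(i < d, j < d) (P i (widen_ord (leqnSn d) j))%:~R.

Lemma ord_cases d (j : 'I_d.+1) :
  (exists j' : 'I_d, j = widen_ord (leqnSn d) j') \/ j = ord_max.
Proof.
case: (unliftP ord_max j) => [j' ->|->]; last by right.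
by left; exists j'; apply: val_inj; exact: lift_max.
Qed.

Lemma kernelK d (P : 'M[int]_(d, d.+1)) (W : 'I_d.+1 -> rat)
  (HA : A0 P \in unitmx)
  (HW : forall i, \sum_j W j * (P i j)%:~R = 0)
  (lam : 'I_d.+1 -> rat) (Hl : forall i, \sum_j lam j * (P i j)%:~R = 0) :
  forall j, lam j * W ord_max = lam ord_max * W j.
Proof.
pose mu j := lam j * W ord_max - lam ord_max * W j.
have Hmu : forall i, \sum_j mu j * (P i j)%:~R = 0.
  move=> i.
  have -> : \sum_j mu j * (P i j)%:~R =
     W ord_max * \sum_j lam j * (P i j)%:~R - lam ord_max * \sum_j W j * (P i j)%:~R.
    rewrite !mulr_sumr -sumrB; apply: eq_bigr => j _; rewrite /mu; ring.
  by rewrite Hl HW !mulr0 subr0.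
pose c : 'cV[rat]_d := \col_(j < d) mu (widen_ord (leqnSn d) j).
have Hc : A0 P *m c = 0.
  apply/matrixP => i k; rewrite !mxE (ord1 k).
  have := Hmu i; rewrite big_ord_recr /= {2}/mu subrr mul0r addr0 => E.
  rewrite -[X in _ = X]E.
  by apply: eq_bigr => j _; rewrite !mxE mulrC.
have c0 : c = 0 by rewrite -(mulKmx HA c) Hc mulmx0.
move=> j; case: (ord_cases j) => [[j' ->]|->]; last by rewrite mulrC.
apply/eqP; rewrite -subr_eq0; apply/eqP.
by have := congr1 (fun M : 'cV[rat]_d => M j' 0) c0; rewrite !mxE.
Qed.

Lemma pairing_sub d (u v : 'rV[rat]_d) (x : 'cV[rat]_d) :
  pairing (u - v) x = pairing u x - pairing v x.
Proof.
rewrite /pairing -sumrB; apply: eq_bigr => i _; by rewrite !mxE mulrBl.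
Qed.

Lemma dual_zero d (P : 'M[int]_(d, d.+1)) (W : 'I_d.+1 -> rat)
  (HA : A0 P \in unitmx)
  (HW : forall i, \sum_j W j * (P i j)%:~R = 0) (k : 'I_d.+1) (Hk : W k != 0)
  (x : 'rV[rat]_d) (Hx : forall j, j != k -> pairing x (vtx P j) = 0) : x = 0.
Proof.
have Hall : forall j, pairing x (vtx P j) = 0.
  have S : \sum_j W j * pairing x (vtx P j) = 0.
    rewrite /pairing.
    under eq_bigr do rewrite mulr_sumr.
    rewrite exchange_big /= big1 // => i _.
    under eq_bigr do rewrite !mxE mulrCA.
    by rewrite -mulr_sumr HW mulr0.
  move: S; rewrite (bigD1 k) //= big1 ?addr0; last first.
    by move=> j /Hx ->; rewrite mulr0.
  move/eqP; rewrite mulf_eq0 (negPf Hk) /= => /eqP Hk0 j.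
  by case: (eqVneq j k) => [->|/Hx].
have H : x *m A0 P = 0.
  apply/matrixP => i j; rewrite (ord1 i) !mxE.
  rewrite -[RHS](Hall (widen_ord (leqnSn d) j)) /pairing.
  by apply: eq_bigr => l _; rewrite !mxE.
by rewrite -(mulmxK HA x) H mul0mx.
Qed.

Lemma dual_uniq d (P : 'M[int]_(d, d.+1)) (W : 'I_d.+1 -> rat)
  (HA : A0 P \in unitmx)
  (HW : forall i, \sum_j W j * (P i j)%:~R = 0) (k : 'I_d.+1) (Hk : W k != 0)
  (u v : 'rV[rat]_d) : is_dual_vertex P k u -> is_dual_vertex P k v -> u = v.
Proof.
move=> Hu Hv; apply/eqP; rewrite -subr_eq0; apply/eqP.
apply: (dual_zero HA HW Hk) => j Hj.
by rewrite pairing_sub Hu // Hv // subrr.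
Qed.


Lemma A0E d a b (i j : 'I_d) : A0 (Pmat d a b) i j = (a i.+1 j.+1)%:~R.
Proof. by rewrite !mxE /= ltn_ord. Qed.

Lemma A0_unit d (a : nat -> nat -> int) b
  (Htri : forall i k, (1 <= k)%N -> (k < i)%N -> (i <= d)%N -> a i k = 0)
  (Hdiag : forall k, (1 <= k <= d)%N -> 1 <= a k k) :
  A0 (Pmat d a b) \in unitmx.
Proof.
rewrite unitmxE unitfE -det_tr det_trig.
  apply/prodf_neq0 => i _; rewrite mxE A0E intr_eq0.
  have := Hdiag i.+1; rewrite /= ltn_ord => /(_ isT); by case: (a _ _) => // -[].
apply/is_trig_mxP => i j Hij; rewrite mxE A0E Htri ?ltnS //; exact: ltn_ord.
Qed.

Lemma rel_rat d (a : nat -> nat -> int) b alpha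
  (Htri : forall i k, (1 <= k)%N -> (k < i)%N -> (i <= d)%N -> a i k = 0)
  (Hiii : forall k, (1 <= k <= d)%N ->
     b k * (wt d alpha d)%:Z = \sum_(k <= l < d.+1) a k l * (wt d alpha l.-1)%:Z)
  (i : 'I_d) :
  \sum_(j < d.+1) ((wt d alpha j)%:R : rat) * (Pmat d a b i j)%:~R = 0.
Proof.
rewrite -[RHS]/((0:int)%:~R : rat) -(rel_int Htri Hiii i) rmorph_sum.
by apply: eq_bigr => j _; rewrite rmorphM.
Qed.

Lemma sum_pairing d (P : 'M[int]_(d, d.+1)) (W : 'I_d.+1 -> rat)
  (HW : forall i, \sum_j W j * (P i j)%:~R = 0) (x : 'rV[rat]_d) :
  \sum_j W j * pairing x (vtx P j) = 0.
Proof.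
rewrite /pairing.
under eq_bigr do rewrite mulr_sumr.
rewrite exchange_big /= big1 // => i _.
under eq_bigr do rewrite !mxE mulrCA.
by rewrite -mulr_sumr HW mulr0.
Qed.

Lemma size_useq d a alpha k n : size (useq d a alpha k n) = n.
Proof. by elim: n => //= n IH; rewrite size_rcons IH. Qed.

Lemma nth_useq d a alpha k m p i : (i < m)%N ->
  nth 0 (useq d a alpha k (p + m)) i = nth 0 (useq d a alpha k m) i.
Proof.
move=> Him; elim: p => //= p IH.
by rewrite nth_rcons size_useq ltn_addl.
Qed.

Lemma nth_useq_step d a alpha k j n : (j < n)%N ->
  nth 0 (useq d a alpha k n) j = ustep d a alpha k j.+1 (useq d a alpha k j).
Proof.
move=> Hj; rewrite -(subnK Hj) nth_useq //= nth_rcons size_useq ltnn eqxx.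
by [].
Qed.


Lemma p5_col_eq d (a : nat -> nat -> int) b alpha (k : nat)
  (Htri : forall i k, (1 <= k)%N -> (k < i)%N -> (i <= d)%N -> a i k = 0)
  (Hdiag : forall k, (1 <= k <= d)%N -> 1 <= a k k)
  (HWk : ((wt d alpha k)%:R : rat) != 0) (j : 'I_d) :
  pairing (urec d a alpha k) (vtx (Pmat d a b) (widen_ord (leqnSn d) j)) =
  if j == k :> nat then ((wsum d alpha)%:R - (wt d alpha k)%:R) / (wt d alpha k)%:R
  else -1.
Proof.
rewrite /pairing.
pose F i := nth 0 (useq d a alpha k d) i * (a i.+1 j.+1)%:~R.
rewrite (eq_bigr (fun i : 'I_d => F i)); last by move=> i _; rewrite !mxE /= ltn_ord.
rewrite -(big_mkord xpredT F) (big_cat_nat (leq0n j.+1) (ltn_ord j)) /=.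
rewrite [X in _ + X]big_nat_cond [X in _ + X]big1 ?addr0; last first.
  move=> i /andP [/andP [H1 H2] _]; rewrite /F Htri ?mulr0 //.
have Hnth : forall i, (i < j)%N -> nth 0 (useq d a alpha k d) i = nth 0 (useq d a alpha k j) i.
  move=> i Hi; rewrite -[X in useq _ _ _ _ X](subnK (ltnW (ltn_ord j))).
  exact: nth_useq.
rewrite big_nat_recr //= {2}/F nth_useq_step //.
have ajj0 : ((a j.+1 j.+1)%:~R : rat) != 0.
  rewrite intr_eq0; have := Hdiag j.+1; rewrite /= ltn_ord => /(_ isT).
  by case: (a _ _) => // -[].
rewrite /ustep; cbv zeta.
rewrite big_add1 /=.
have -> : \sum_(0 <= i < j) (a i.+1 j.+1)%:~R * (useq d a alpha k j)`_i = \sum_(0 <= i < j) F i.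
  by apply: eq_big_nat => i /andP [_ Hi]; rewrite /F Hnth // mulrC.
set s := \sum_(0 <= i < j) F i.
by rewrite eqSS; case: eqP => _; field; rewrite ?ajj0 ?HWk.
Qed.


Lemma urec_dual d (a : nat -> nat -> int) b alpha (k : 'I_d.+1)
  (Halpha : forall i, (i <= d)%N -> (0 < alpha i)%N)
  (Htri : forall i k, (1 <= k)%N -> (k < i)%N -> (i <= d)%N -> a i k = 0)
  (Hdiag : forall k, (1 <= k <= d)%N -> 1 <= a k k)
  (Hiii : forall k, (1 <= k <= d)%N ->
     b k * (wt d alpha d)%:Z = \sum_(k <= l < d.+1) a k l * (wt d alpha l.-1)%:Z) :
  is_dual_vertex (Pmat d a b) k (urec d a alpha k).
Proof.
have Wpos : forall i : 'I_d.+1, ((wt d alpha i)%:R : rat) != 0.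
  move=> i; rewrite pnatr_eq0 -lt0n; apply: wt_gt0 => //; rewrite -ltnS.
  exact: ltn_ord.
have HWk := Wpos k.
move=> j Hjk; case: (ord_cases j) => [[j' Ej]|Ej]; subst j.
  rewrite p5_col_eq //; have -> : (j' == k :> nat) = false => //.
  apply/negbTE; move: Hjk; apply: contra => /eqP E; apply/eqP/val_inj.
  by rewrite /= E.
have Hkd : (k < d)%N.
  rewrite ltn_neqAle -ltnS ltn_ord andbT; apply: contra Hjk => /eqP E.
  by apply/eqP/val_inj; rewrite /= E.
pose k' : 'I_d := Ordinal Hkd.
have S := sum_pairing (rel_rat Htri Hiii) (urec d a alpha k).
rewrite big_ord_recr /= in S.
rewrite (eq_bigr (fun i : 'I_d => ((wt d alpha i)%:R : rat) * (if i == k :> nat then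
   ((wsum d alpha)%:R - (wt d alpha k)%:R) / (wt d alpha k)%:R else -1))) in S; last first.
  by move=> i _; rewrite p5_col_eq.
move: S.
set p := pairing _ _.
rewrite (bigD1 k') //= eqxx.
rewrite (eq_bigr (fun i : 'I_d => - (wt d alpha i)%:R)); last first.
  move=> i Hi; have -> : (i == k :> nat) = false; last by rewrite mulrN1.
  apply/negbTE; apply: contra Hi => /eqP E; apply/eqP/val_inj; by rewrite /= E.
rewrite sumrN.
have Ews : ((wsum d alpha)%:R : rat) =
   (wt d alpha k)%:R + \sum_(i < d | i != k') (wt d alpha i)%:R + ((wt d alpha d)%:R : rat).
  rewrite /wsum natr_sum big_ord_recr /= (bigD1 k') //=.
have Wd0 : ((wt d alpha d)%:R : rat) != 0 by exact: (Wpos ord_max).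
rewrite Ews => H.
have : ((wt d alpha d)%:R : rat) * (p + 1) = 0.
  rewrite -H; field; exact: HWk.
by move/eqP; rewrite mulf_eq0 (negPf Wd0) /= addr_eq0 => /eqP.
Qed.


Lemma ip_simplex d (P : 'M[int]_(d, d.+1)) (W : 'I_d.+1 -> rat)
  (HA : A0 P \in unitmx)
  (HW : forall i, \sum_j W j * (P i j)%:~R = 0) (Wpos : forall j, 0 < W j) :
  IP_simplex P.
Proof.
have SW : 0 < \sum_j W j.
  rewrite big_ord_recl; have := Wpos ord0.
  have : 0 <= \sum_(i < d) W (lift ord0 i) by apply: sumr_ge0 => i _; exact: ltW.
  lra.
split.
  apply: mxrank_unit; rewrite unitmxE unitfE -det_tr; apply/negP => /det0P [v v0 Hv].
  pose lam j := match unlift ord0 j with Some j' => v 0 j' | None => - \sum_i v 0 i end.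
  have lam0 : lam ord0 = - \sum_i v 0 i by rewrite /lam unlift_none.
  have lamS : forall j : 'I_d, lam (lift ord0 j) = v 0 j by move=> j; rewrite /lam liftK.
  have Hl : forall i, \sum_j lam j * (P i j)%:~R = 0.
    move=> i; have := congr1 (fun M : 'rV[rat]_d => M 0 i) Hv; rewrite !mxE => E.
    rewrite -[RHS]E big_ord_recl lam0.
    rewrite [X in _ + X](eq_bigr (fun j => v 0 j * (P i (lift ord0 j))%:~R)); last first.
      by move=> j _; rewrite lamS.
    under [RHS]eq_bigr do rewrite !mxE mulrBr.
    by rewrite sumrB -mulr_suml mulNr addrC.
  have K := kernelK HA HW Hl.
  have Hs : (\sum_j lam j) * W ord_max = lam ord_max * \sum_j W j.
    by rewrite mulr_suml mulr_sumr; apply: eq_bigr => j _; exact: K.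
  have Hs0 : \sum_j lam j = 0.
    rewrite big_ord_recl lam0 [X in _ + X](eq_bigr (fun j => v 0 j)) ?addNr //.
  rewrite Hs0 mul0r in Hs.
  have Ld : lam ord_max = 0.
    by move/esym/eqP: Hs; rewrite mulf_eq0 (gt_eqF SW) orbF => /eqP.
  apply: (negP v0); apply/eqP/matrixP => i j; rewrite (ord1 i) mxE -lamS.
  have := K (lift ord0 j); rewrite Ld mul0r => /eqP.
  by rewrite mulf_eq0 (gt_eqF (Wpos _)) orbF => /eqP.
exists (fun j => W j / \sum_j W j); split; [|split].
- by move=> j; rewrite divr_gt0.
- by rewrite -mulr_suml divff // gt_eqF.
- move=> i; rewrite (eq_bigr (fun j => (W j * (P i j)%:~R) / \sum_j W j)).
    by rewrite -mulr_suml HW mul0r.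
  by move=> j _; rewrite !mxE mulrAC.
Qed.


Lemma cof_rel d (P : 'M[int]_(d, d.+1)) (r : 'I_d) :
  \sum_(j < d.+1) ((-1) ^+ j * \det (col' j P)) * P r j = 0.
Proof.
pose Q : 'M[int]_d.+1 := \matrix_(i < d.+1, j < d.+1) P (odflt r (unlift ord0 i)) j.
have Q0 : \det Q = 0.
  apply: (@determinant_alternate _ _ _ ord0 (lift ord0 r)); first exact: neq_lift.
  by move=> j; rewrite !mxE unlift_none liftK.
rewrite -[RHS]Q0 (expand_det_row Q ord0); apply: eq_bigr => j _.
rewrite /cofactor mxE unlift_none /= mulrC add0n; congr (_ * (_ * _)).
congr (\det _); apply/matrixP => i l; by rewrite !mxE liftK.
Qed.

Lemma nat_part n (c w : 'I_n.+1 -> nat) (n0 : 'I_n.+1) :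
  (forall j, c j * w n0 = c n0 * w j)%N -> (\big[gcdn/0%N]_j w j = 1)%N ->
  (0 < w n0)%N -> (0 < c n0)%N -> forall i, (c i %/ \big[gcdn/0%N]_j c j)%N = w i.
Proof.
move=> Hc Hg w0 c0.
have Hdiv : (w n0 %| c n0)%N.
  have : (w n0 %| \big[gcdn/0%N]_j (c n0 * w j))%N.
    apply/dvdn_biggcdP => j _; rewrite -Hc; exact: dvdn_mull.
  by rewrite -(big_morph (muln (c n0)) (muln_gcdr (c n0)) (muln0 (c n0))) Hg muln1.
pose T := (c n0 %/ w n0)%N.
have ET : c n0 = (T * w n0)%N by rewrite divnK.
have Ecj : forall j, c j = (T * w j)%N.
  move=> j; apply/eqP; rewrite -(eqn_pmul2r w0) Hc ET; apply/eqP; ring.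
have T0 : (0 < T)%N by move: c0; rewrite ET muln_gt0 => /andP [].
have -> : (\big[gcdn/0%N]_j c j = T)%N.
  rewrite (eq_bigr (fun j => T * w j)%N) //.
  by rewrite -(big_morph (muln T) (muln_gcdr T) (muln0 T)) Hg muln1.
by move=> i; rewrite Ecj mulKn.
Qed.


Lemma weights d (a : nat -> nat -> int) b alpha
  (Halpha : forall i, (i <= d)%N -> (0 < alpha i)%N)
  (Htri : forall i k, (1 <= k)%N -> (k < i)%N -> (i <= d)%N -> a i k = 0)
  (Hdiag : forall k, (1 <= k <= d)%N -> 1 <= a k k)
  (Hiii : forall k, (1 <= k <= d)%N ->
     b k * (wt d alpha d)%:Z = \sum_(k <= l < d.+1) a k l * (wt d alpha l.-1)%:Z)
  (i : 'I_d.+1) :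
  reduced_weight (Pmat d a b) i = wt d alpha i.
Proof.
set P := Pmat d a b.
have HA : A0 P \in unitmx by exact: A0_unit.
have HW := rel_rat Htri Hiii.
pose c (j : 'I_d.+1) : int := (-1) ^+ j * \det (col' j P).
have Hl : forall r, \sum_j ((c j)%:~R : rat) * (P r j)%:~R = 0.
  move=> r; have := congr1 (fun x : int => (x%:~R : rat)) (cof_rel P r).
  rewrite /= rmorph_sum rmorph0 => E; rewrite -[RHS]E.
  apply: eq_bigr => j _; rewrite /c; symmetry; exact: intrM.
have K := kernelK HA HW Hl.
have Kn : forall j, (weight P j * wt d alpha d = weight P ord_max * wt d alpha j)%N.
  move=> j; have := K j.
  rewrite -[((wt d alpha ord_max)%:R : rat)]/(((wt d alpha ord_max)%:Z)%:~R : rat).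
  rewrite -[((wt d alpha j)%:R : rat)]/(((wt d alpha j)%:Z)%:~R : rat).
  rewrite -!rmorphM => /intr_inj /(congr1 absz).
  by rewrite !abszM !absz_sign !mul1n.
have Hd : (0 < weight P ord_max)%N.
  rewrite /weight absz_gt0.
  have E : A0 P = map_mx intr (col' ord_max P).
    apply/matrixP => p q; rewrite !mxE /=. by rewrite /bump (leqNgt d q) ltn_ord /= add0n ltn_ord.
  move: HA; rewrite unitmxE unitfE E det_map_mx.
  by apply: contra => /eqP ->; rewrite rmorph0.
apply: (nat_part Kn) => //.
- exact: wt_gcd1.
- exact: wt_gt0.
Qed.


Lemma prim_int d (u : 'rV[rat]_d) (n m : nat) : (0 < n)%N ->
  primitive_vec (n%:R *: u) -> (integral_vec (m%:R *: u) <-> (n %| m)%N).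
Proof.
move=> n0 [z [Hz Hg]].
have Ez : forall i, (n%:R : rat) * u 0 i = (z 0 i)%:~R.
  by move=> i; have := congr1 (fun M : 'rV[rat]_d => M 0 i) Hz; rewrite !mxE.
have n0' : (n%:R : rat) != 0 by rewrite pnatr_eq0 -lt0n.
split.
  move=> /forallP Hi.
  have Hd : forall i : 'I_d, (n %| m * `|z ord0 i|)%N.
    move=> i; have := Hi i; rewrite mxE => /intrP [y Hy].
    have E : ((m%:Z * z 0 i)%:~R : rat) = ((n%:Z * y)%:~R : rat).
      rewrite !intrM -Ez -Hy /=.
      rewrite -[(m%:Z)%:~R]/(m%:R : rat) -[(n%:Z)%:~R]/(n%:R : rat); ring.
    move/intr_inj/(congr1 absz): E; rewrite !abszM /= => ->.
    exact: dvdn_mulr.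
  have : (n %| \big[gcdn/0%N]_(i < d) (m * `|z ord0 i|))%N.
    by apply/dvdn_biggcdP => i _; exact: Hd.
  by rewrite -(big_morph (muln m) (muln_gcdr m) (muln0 m)) Hg muln1.
move=> /dvdnP [q ->]; apply/forallP => i; rewrite mxE; apply/intrP.
exists (q%:Z * z 0 i); rewrite intrM -Ez natrM.
rewrite -[(q%:Z)%:~R]/(q%:R : rat); ring.
Qed.

Unset Implicit Arguments.


Theorem proposition5p1 (d : nat) (g : nat) (gl : nat -> nat) (alpha : nat -> nat)
    (a : nat -> nat -> int) (b : nat -> int) :
  (2 <= d)%N ->
  (0 < g)%N ->
  (forall i, (i <= d)%N -> (0 < gl i)%N) ->
  g = \big[lcmn/1%N]_(i < d.+1) gl i ->
  (forall i, (i <= d)%N -> (0 < alpha i)%N) ->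
  \sum_(i < d.+1) ((alpha i)%:R : rat)^-1 = (g%:R : rat)^-1 ->
  (* upper triangular form of P *)
  (forall i k, (1 <= k)%N -> (k < i)%N -> (i <= d)%N -> a i k = 0) ->
  (* (i) *)
  (forall k, (1 <= k <= d)%N -> 1 <= a k k /\ (a k k %| (alpha k.-1)%:Z)%Z) ->
  (* (ii) *)
  (forall i k, (1 <= i)%N -> (i < k)%N -> (k <= d)%N -> 0 <= a i k < a k k) ->
  (* (iii) *)
  (forall k, (1 <= k <= d)%N ->
     b k * (wt d alpha d)%:Z = \sum_(k <= l < d.+1) a k l * (wt d alpha l.-1)%:Z) ->
  let P := Pmat d a b in
  [/\ IP_simplex P,
      (forall i : 'I_d.+1, reduced_weight P i = wt d alpha i),
      (forall (k : 'I_d.+1) (u : 'rV[rat]_d), is_dual_vertex P k u <-> u = urec d a alpha k)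
    & ((forall (k : 'I_d.+1) (u : 'rV[rat]_d),
          is_dual_vertex P k u -> primitive_vec ((gl k)%:R *: u)) ->
       is_gorenstein_index P g /\
       forall k : 'I_d.+1, is_local_gorenstein_index P k (gl k))].
Proof.
move=> _ g0 Hgl Hg Halpha _ Htri Hi _ Hiii P.
have Hdiag : forall k, (1 <= k <= d)%N -> 1 <= a k k by move=> k /Hi [].
have HA : A0 P \in unitmx by exact: A0_unit.
have HW := rel_rat Htri Hiii.
have Wpos : forall j : 'I_d.+1, 0 < ((wt d alpha j)%:R : rat).
  move=> j; rewrite ltr0n; apply: wt_gt0 => //; rewrite -ltnS; exact: ltn_ord.
have Udual : forall k : 'I_d.+1, is_dual_vertex P k (urec d a alpha k).
  by move=> k; apply: urec_dual.
have Hdual : forall (k : 'I_d.+1) (u : 'rV[rat]_d),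
    is_dual_vertex P k u <-> u = urec d a alpha k.
  move=> k u; split; last by move=> ->.
  move=> Hu; apply: (dual_uniq HA HW _ Hu (Udual k)).
  exact: lt0r_neq0 (Wpos k).
have glk : forall k : 'I_d.+1, (0 < gl k)%N.
  by move=> k; apply: Hgl; rewrite -ltnS.
split.
- exact: (ip_simplex HA HW Wpos).
- by move=> i; apply: weights.
- exact: Hdual.
move=> Hprim.
have Hint : forall (k : 'I_d.+1) m,
    integral_vec (m%:R *: urec d a alpha k) <-> (gl k %| m)%N.
  by move=> k m; apply: prim_int => //; apply: Hprim.
split.
  split => //; split.
    move=> k u /Hdual ->; apply/Hint; rewrite Hg.
    exact: (biglcmn_sup k).
  move=> m m0 Hm; apply: dvdn_leq => //; rewrite Hg.
  apply/dvdn_biglcmP => k _; apply/Hint; exact: Hm.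
move=> k; exists (urec d a alpha k); split => //; split => //; split.
  by apply/Hint.
by move=> m m0 /Hint Hd; apply: dvdn_leq.
Qed.
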